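(* Under the setting and assumptions described in the context, suppose that every subgradient returned by the oracle during the run of Algorithm MD is nonzero, and that the algorithm stops after $N$ iterations, where $N$ is the smallest positive integer with $$\sum_{i=0}^{N-1}\frac{1}{M_i^2}\ \ge\ \frac{2\Theta_0^2}{\varepsilon^2}.$$ Then the index set $I\subseteq\{0,\dots,N-1\}$ of ''productive'' steps is nonempty, so the output $\bar x^N=\big(\sum_{i\in I}h_i x^i\big)/\big(\sum_{i\in I}h_i\big)$ is well defined, and it satisfies $$f(\bar x^N)-f(x_* )\le\varepsilon,\qquad g(\bar x^N)\le\varepsilon .$$ Moreover, if $M>0$ is defined by $\frac{N}{M^2}=\sum_{i=0}^{N-1}\frac{1}{M_i^2}$ (an ''averaged'' subgradient norm replacing the global Lipschitz constant), then $N=\big\lceil 2M^2\Theta_0^2/\varepsilon^2\big\rceil$ in the sense that $N\ge 2M^2\Theta_0^2/\varepsilon^2$ with $N$ the first index at which the stopping criterion is met.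
   Context: Let $E$ be an $n$-dimensional real vector space with an arbitrary norm $\|\cdot\|$ and dual norm $\|\xi\|_*=\max\{\langle\xi,x\rangle:\|x\|\le1\}$ on $E^*$. Let $\mathcal X\subset E$ be a closed convex set, and let $f,g:\mathcal X\to\mathbb R$ be convex, subdifferentiable (at every point of $\mathcal X$ they have a subgradient with finite dual norm) and Lipschitz continuous. Consider the problem: minimize $f(x)$ over $x\in\mathcal X$ subject to $g(x)\le 0$, and let $x_*$ be a solution of it (so $g(x_* )\le0$ and $f(x_* )\le f(x)$ for all feasible $x$). A first-order oracle returns, for $x\in\mathcal X$, a subgradient $\nabla f(x)$ of $f$, a subgradient $\nabla g(x)$ of $g$, and the value $g(x)$. Let $d:\mathcal X\to\mathbb R$ (distance generating function) be continuously differentiable and 1-strongly convex w.r.t. $\|\cdot\|$, i.e. $\langle d'(x)-d'(y),x-y\rangle\ge\|x-y\|^2$ for all $x,y\in\mathcal X$, with a minimizer $x^0=\arg\min_{x\in\mathcal X}d(x)$. Let $\Theta_0>0$ satisfy $d(x_* )-d(x^0)\le\Theta_0^2$. The Bregman divergence is $V(x,y)=d(y)-d(x)-\langle d'(x),y-x\rangle$, and the proximal mapping is $\mathrm{Mirr}_x(y)=\arg\min_{u\in\mathcal X}\{\langle y,u\rangle+V(x,u)\}$ for $x\in\mathcal X$, $y\in E^*$. Algorithm MD (input $\varepsilon>0$, $\Theta_0^2$, $d$, $\mathcal X$): start at $x^0=\arg\min_{\mathcal X}d$, $I=\emptyset$. For $i=0,1,2,\dots$: if $g(x^i)\le\varepsilon$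 (''productive step''), set $M_i=\|\nabla f(x^i)\|_*$, $h_i=\varepsilon/M_i^2$, $x^{i+1}=\mathrm{Mirr}_{x^i}(h_i\nabla f(x^i))$ and add $i$ to $I$; otherwise (''non-productive step''), set $M_i=\|\nabla g(x^i)\|_*$, $h_i=\varepsilon/M_i^2$, $x^{i+1}=\mathrm{Mirr}_{x^i}(h_i\nabla g(x^i))$. Stop after iteration $N-1$, where $N$ is the first integer with $\sum_{i=0}^{N-1}M_i^{-2}\ge 2\Theta_0^2/\varepsilon^2$, and output $\bar x^N=\sum_{i\in I}h_ix^i/\sum_{i\in I}h_i$. *)

(* Defs.v *)
(* The n-dimensional space E is modelled as R^n in coordinates:
   vectors are functions nat -> R vanishing at indices >= n (predicate inE n).
   E^* is identified with R^n through the standard pairing <xi,x> = sum_{k<n} xi_k x_k. *)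
From Stdlib Require Import Reals.
Open Scope R_scope.

Definition vec := nat -> R.

Fixpoint rsum (N : nat) (f : nat -> R) : R :=
  match N with O => 0 | S k => rsum k f + f k end.

Definition inE (n : nat) (x : vec) : Prop := forall k, (n <= k)%nat -> x k = 0.

Definition vadd (x y : vec) : vec := fun k => x k + y k.
Definition vsub (x y : vec) : vec := fun k => x k - y k.
Definition vscal (a : R) (x : vec) : vec := fun k => a * x k.

Definition dot (n : nat) (xi x : vec) : R := rsum n (fun k => xi k * x k).

Definition nonzero_vec (n : nat) (x : vec) : Prop := exists k, (k < n)%nat /\ x k <> 0.

Definition is_norm (n : nat) (nrm : vec -> R) : Prop :=
  (forall x, inE n x -> 0 <= nrm x) /\
  (forall x, inE n x -> nrm x = 0 -> forall k, x k = 0) /\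
  (forall a x, inE n x -> nrm (vscal a x) = Rabs a * nrm x) /\
  (forall x y, inE n x -> inE n y -> nrm (vadd x y) <= nrm x + nrm y).

Definition is_dual_norm (n : nat) (nrm dn : vec -> R) : Prop :=
  forall xi, inE n xi ->
    (exists x, inE n x /\ nrm x <= 1 /\ dot n xi x = dn xi) /\
    (forall x, inE n x -> nrm x <= 1 -> dot n xi x <= dn xi).

Definition closed_convex (n : nat) (nrm : vec -> R) (X : vec -> Prop) : Prop :=
  (forall x, X x -> inE n x) /\
  (forall x y t, X x -> X y -> 0 <= t <= 1 -> X (vadd (vscal t x) (vscal (1 - t) y))) /\
  (forall x, inE n x -> (forall e, 0 < e -> exists y, X y /\ nrm (vsub x y) < e) -> X x).

Definition convex_on (X : vec -> Prop) (f : vec -> R) : Prop :=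
  forall x y t, X x -> X y -> 0 <= t <= 1 ->
    f (vadd (vscal t x) (vscal (1 - t) y)) <= t * f x + (1 - t) * f y.

Definition lipschitz_on (nrm : vec -> R) (X : vec -> Prop) (f : vec -> R) : Prop :=
  exists L, forall x y, X x -> X y -> Rabs (f x - f y) <= L * nrm (vsub x y).

Definition is_subgrad (n : nat) (X : vec -> Prop) (f : vec -> R) (x xi : vec) : Prop :=
  inE n xi /\ forall y, X y -> f y >= f x + dot n xi (vsub y x).

Definition C1_on (n : nat) (nrm dn : vec -> R) (X : vec -> Prop) (d : vec -> R) (dd : vec -> vec) : Prop :=
  (forall x, X x -> inE n (dd x)) /\
  (forall x, X x -> forall e, 0 < e -> exists del, 0 < del /\
      forall y, X y -> nrm (vsub y x) < del ->
        Rabs (d y - d x - dot n (dd x) (vsub y x)) <= e * nrm (vsub y x)) /\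
  (forall x, X x -> forall e, 0 < e -> exists del, 0 < del /\
      forall y, X y -> nrm (vsub y x) < del -> dn (vsub (dd y) (dd x)) < e).

Definition strongly_convex1 (n : nat) (nrm : vec -> R) (X : vec -> Prop) (dd : vec -> vec) : Prop :=
  forall x y, X x -> X y -> dot n (vsub (dd x) (dd y)) (vsub x y) >= (nrm (vsub x y)) ^ 2.

Definition is_argmin (X : vec -> Prop) (F : vec -> R) (u : vec) : Prop :=
  X u /\ forall w, X w -> F u <= F w.

Definition bregman (n : nat) (d : vec -> R) (dd : vec -> vec) (x y : vec) : R :=
  d y - d x - dot n (dd x) (vsub y x).

Definition is_mirr (n : nat) (X : vec -> Prop) (d : vec -> R) (dd : vec -> vec) (x y u : vec) : Prop :=
  is_argmin X (fun w => dot n y w + bregman n d dd x w) u.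

Definition productive (g : vec -> R) (eps : R) (x : vec) : bool :=
  if Rle_dec (g x) eps then true else false.

Definition md_sg (g : vec -> R) (gf gg : vec -> vec) (eps : R) (x : vec) : vec :=
  if productive g eps x then gf x else gg x.

Definition md_M (dn : vec -> R) (g : vec -> R) (gf gg : vec -> vec) (eps : R) (x : vec) : R :=
  dn (md_sg g gf gg eps x).

Definition md_h (dn : vec -> R) (g : vec -> R) (gf gg : vec -> vec) (eps : R) (x : vec) : R :=
  eps / (md_M dn g gf gg eps x) ^ 2.

Definition md_iterates (n : nat) (X : vec -> Prop) (d : vec -> R) (dd : vec -> vec)
  (dn : vec -> R) (g : vec -> R) (gf gg : vec -> vec) (eps : R) (x0 : vec)
  (xs : nat -> vec) (N : nat) : Prop :=
  xs 0%nat = x0 /\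
  forall i, (i < N)%nat ->
    is_mirr n X d dd (xs i)
      (vscal (md_h dn g gf gg eps (xs i)) (md_sg g gf gg eps (xs i))) (xs (S i)).

Definition md_S (dn : vec -> R) (g : vec -> R) (gf gg : vec -> vec) (eps : R)
  (xs : nat -> vec) (K : nat) : R :=
  rsum K (fun i => / (md_M dn g gf gg eps (xs i)) ^ 2).

Definition md_stops_at (dn : vec -> R) (g : vec -> R) (gf gg : vec -> vec) (eps Theta0 : R)
  (xs : nat -> vec) (N : nat) : Prop :=
  (1 <= N)%nat /\
  md_S dn g gf gg eps xs N >= 2 * Theta0 ^ 2 / eps ^ 2 /\
  forall K, (1 <= K < N)%nat -> md_S dn g gf gg eps xs K < 2 * Theta0 ^ 2 / eps ^ 2.

Definition md_output (dn : vec -> R) (g : vec -> R) (gf gg : vec -> vec) (eps : R)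
  (xs : nat -> vec) (N : nat) : vec :=
  fun k =>
    rsum N (fun i => if productive g eps (xs i)
                     then md_h dn g gf gg eps (xs i) * xs i k else 0) /
    rsum N (fun i => if productive g eps (xs i)
                     then md_h dn g gf gg eps (xs i) else 0).

(* Main.v *)
Require Import Defs.
From Stdlib Require Import Reals Lra Lia Classical FunctionalExtensionality.
From Coquelicot Require Import Coquelicot.
Open Scope R_scope.

Lemma rsum_ext N f g : (forall i, (i < N)%nat -> f i = g i) -> rsum N f = rsum N g.
Proof. induction N; simpl; intros H; auto. rewrite IHN by (intros; apply H; lia). rewrite H by lia. auto. Qed.

Lemma rsum_plus N f g : rsum N (fun i => f i + g i) = rsum N f + rsum N g.
Proof. induction N; simpl; [lra|rewrite IHN; lra]. Qed.

Lemma rsum_minus N f g : rsum N (fun i => f i - g i) = rsum N f - rsum N g.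
Proof. induction N; simpl; [lra|rewrite IHN; lra]. Qed.

Lemma rsum_scal N c f : rsum N (fun i => c * f i) = c * rsum N f.
Proof. induction N; simpl; [lra|rewrite IHN; lra]. Qed.

Lemma rsum_zero N : rsum N (fun _ => 0) = 0.
Proof. induction N; simpl; [lra|rewrite IHN; lra]. Qed.

Lemma rsum_le N f g : (forall i, (i < N)%nat -> f i <= g i) -> rsum N f <= rsum N g.
Proof. induction N; simpl; intros H; [lra|]. assert (f N <= g N) by (apply H; lia).
 assert (rsum N f <= rsum N g) by (apply IHN; intros; apply H; lia). lra. Qed.

Lemma rsum_lt N f g : (1 <= N)%nat -> (forall i, (i < N)%nat -> f i < g i) -> rsum N f < rsum N g.
Proof. intros HN H. destruct N; [lia|]. simpl.
 assert (f N < g N) by (apply H; lia).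
 assert (rsum N f <= rsum N g) by (apply rsum_le; intros; left; apply H; lia). lra. Qed.

Lemma rsum_nonneg N f : (forall i, (i < N)%nat -> 0 <= f i) -> 0 <= rsum N f.
Proof. intros H. rewrite <- (rsum_zero N). apply rsum_le. auto. Qed.

Lemma rsum_pos N f j : (forall i, (i < N)%nat -> 0 <= f i) -> (j < N)%nat -> 0 < f j -> 0 < rsum N f.
Proof. induction N; intros H Hj Hf; [lia|]. simpl.
 destruct (Nat.eq_dec j N).
 - subst. assert (0 <= rsum N f) by (apply rsum_nonneg; intros; apply H; lia). lra.
 - assert (0 < rsum N f) by (apply IHN; [intros; apply H; lia | lia | auto]).
   assert (0 <= f N) by (apply H; lia). lra. Qed.

Lemma rsum_zero_inv N f : (forall i, (i < N)%nat -> 0 <= f i) -> rsum N f = 0 -> forall i, (i < N)%nat -> f i = 0.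
Proof. intros H Hs i Hi. destruct (H i Hi) as [Hp|]; auto.
 assert (0 < rsum N f) by (eapply rsum_pos; eauto). lra. Qed.

Lemma rsum_tele N V : rsum N (fun i => V i - V (S i)) = V 0%nat - V N.
Proof. induction N; simpl; [lra|rewrite IHN; lra]. Qed.

Lemma rsum_delta N k (a : nat -> R) :
  rsum N (fun j => if Nat.eq_dec j k then a j else 0) = if Compare_dec.lt_dec k N then a k else 0.
Proof. induction N; simpl. - destruct (Compare_dec.lt_dec k 0); [lia|auto].
 - rewrite IHN. destruct (Nat.eq_dec N k); destruct (Compare_dec.lt_dec k N); destruct (Compare_dec.lt_dec k (S N)); subst; try lia; lra. Qed.

Lemma dot_ext n a b c e : (forall k, (k < n)%nat -> a k * b k = c k * e k) -> dot n a b = dot n c e.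
Proof. intros; unfold dot; apply rsum_ext; auto. Qed.

Lemma dot_sub_r n a p q : dot n a (vsub p q) = dot n a p - dot n a q.
Proof. unfold dot, vsub. rewrite <- rsum_minus. apply rsum_ext; intros; ring. Qed.
Lemma dot_sub_l n a b p : dot n (vsub a b) p = dot n a p - dot n b p.
Proof. unfold dot, vsub. rewrite <- rsum_minus. apply rsum_ext; intros; ring. Qed.
Lemma dot_add_l n a b p : dot n (vadd a b) p = dot n a p + dot n b p.
Proof. unfold dot, vadd. rewrite <- rsum_plus. apply rsum_ext; intros; ring. Qed.
Lemma dot_add_r n a p q : dot n a (vadd p q) = dot n a p + dot n a q.
Proof. unfold dot, vadd. rewrite <- rsum_plus. apply rsum_ext; intros; ring. Qed.
Lemma dot_scal_r n a c p : dot n a (vscal c p) = c * dot n a p.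
Proof. unfold dot, vscal. rewrite <- rsum_scal. apply rsum_ext; intros; ring. Qed.
Lemma dot_scal_l n a c p : dot n (vscal c a) p = c * dot n a p.
Proof. unfold dot, vscal. rewrite <- rsum_scal. apply rsum_ext; intros; ring. Qed.

Lemma inE_sub n x y : inE n x -> inE n y -> inE n (vsub x y).
Proof. unfold inE, vsub; intros Hx Hy k Hk; rewrite Hx, Hy; auto; ring. Qed.
Lemma inE_scal n c x : inE n x -> inE n (vscal c x).
Proof. unfold inE, vscal; intros Hx k Hk; rewrite Hx; auto; ring. Qed.
Lemma inE_add n x y : inE n x -> inE n y -> inE n (vadd x y).
Proof. unfold inE, vadd; intros Hx Hy k Hk; rewrite Hx, Hy; auto; ring. Qed.

Lemma dot_le_dn n nrm dn s v : is_norm n nrm -> is_dual_norm n nrm dn ->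
  inE n s -> inE n v -> dot n s v <= dn s * nrm v.
Proof.
 intros [N0 [N1 [N2 N3]]] HD Hs Hv.
 destruct (N0 v Hv) as [Hp|Hz].
 - set (v' := vscal (/ nrm v) v).
   assert (Hv' : inE n v') by (apply inE_scal; auto).
   assert (nrm v' = 1).
   { unfold v'. rewrite N2 by auto. rewrite Rabs_right.
     field; lra. left; apply Rinv_0_lt_compat; auto. }
   destruct (HD s Hs) as [_ Hle].
   assert (dot n s v' <= dn s) by (apply Hle; auto; lra).
   unfold v' in H0. rewrite dot_scal_r in H0.
   apply (Rmult_le_compat_r (nrm v)) in H0; [|lra].
   replace (/ nrm v * dot n s v * nrm v) with (dot n s v) in H0 by (field; lra). auto.
 - symmetry in Hz. assert (Hk := N1 v Hv Hz).
   rewrite Hz. replace (dot n s v) with 0. lra.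
   unfold dot. rewrite <- (rsum_zero n). apply rsum_ext; intros. rewrite Hk. ring.
Qed.

Lemma dn_pos n nrm dn s : is_norm n nrm -> is_dual_norm n nrm dn ->
  inE n s -> nonzero_vec n s -> 0 < dn s.
Proof.
 intros HN HD Hs [k [Hk Hsk]].
 set (e := fun j => if Nat.eq_dec j k then s k else 0).
 assert (He : inE n e). { intros j Hj. unfold e. destruct (Nat.eq_dec j k); [lia|auto]. }
 assert (Hd : dot n s e = s k * s k).
 { unfold dot, e. rewrite (rsum_ext _ _ (fun j => if Nat.eq_dec j k then s j * s k else 0)).
   rewrite (rsum_delta n k (fun j => s j * s k)). destruct (Compare_dec.lt_dec k n); [auto|lia].
   intros i Hi. destruct (Nat.eq_dec i k); subst; ring. }
 assert (H := dot_le_dn n nrm dn s e HN HD Hs He).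
 destruct HN as [N0 _]. assert (0 <= nrm e) by auto.
 assert (0 < s k * s k) by (apply Rsqr_pos_lt; auto).
 destruct (Rle_or_lt (dn s) 0); auto.
 assert (dn s * nrm e <= 0) by nra. lra.
Qed.

Lemma Rabs_le_inv a b : Rabs a <= b -> - b <= a <= b.
Proof. unfold Rabs; destruct (Rcase_abs a); intros; lra. Qed.
Lemma comb_sub t w u : vsub (vadd (vscal t w) (vscal (1 - t) u)) u = vscal t (vsub w u).
Proof. apply functional_extensionality; intros k; unfold vsub, vadd, vscal; ring. Qed.

Lemma opt_cond n nrm dn X d dd u a : is_norm n nrm -> closed_convex n nrm X ->
  C1_on n nrm dn X d dd -> X u ->
  (forall w, X w -> d u + dot n a u <= d w + dot n a w) ->
  forall w, X w -> 0 <= dot n a (vsub w u) + dot n (dd u) (vsub w u).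
Proof.
 intros [N0 [N1 [N2 N3]]] [XE [Xc _]] [_ [Hlo _]] Hu Hmin w Hw.
 set (v := vsub w u). assert (Hv : inE n v) by (apply inE_sub; auto).
 set (r := nrm v). assert (Hr : 0 <= r) by (apply N0; auto).
 set (D := dot n a v + dot n (dd u) v).
 destruct (Rle_or_lt 0 D) as [|HD]; auto. exfalso.
 set (e := - D / (2 * r + 2)).
 assert (He : 0 < e) by (unfold e; apply Rdiv_lt_0_compat; lra).
 destruct (Hlo u Hu e He) as [del [Hdel Hlo']].
 set (t := del / (del + r)).
 assert (Ht0 : 0 < t) by (unfold t; apply Rdiv_lt_0_compat; lra).
 assert (Ht1 : t <= 1) by (unfold t; apply Rmult_le_reg_r with (del + r); [lra|]; field_simplify; lra).
 set (wt := vadd (vscal t w) (vscal (1 - t) u)).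
 assert (Hwt : X wt) by (apply Xc; auto; lra).
 assert (Hsub : vsub wt u = vscal t v) by apply comb_sub.
 assert (Hn : nrm (vsub wt u) = t * r).
 { rewrite Hsub, N2 by auto. rewrite Rabs_right by lra. auto. }
 assert (Hlt : nrm (vsub wt u) < del).
 { rewrite Hn. unfold t. apply Rmult_lt_reg_r with (del + r); [lra|].
   field_simplify; [|lra]. nra. }
 specialize (Hlo' wt Hwt Hlt). rewrite Hn, Hsub, dot_scal_r in Hlo'.
 specialize (Hmin wt Hwt).
 assert (Ha : dot n a wt - dot n a u = t * dot n a v).
 { rewrite <- dot_sub_r. rewrite Hsub. apply dot_scal_r. }
 apply Rabs_le_inv in Hlo'.
 assert (e * r < - D / 2).
 { unfold e. apply Rmult_lt_reg_r with (2 * r + 2); [lra|].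
   field_simplify; [|lra]. nra. }
 unfold D in *. nra.
Qed.

Lemma zz_sub a b u x : vsub (vadd (vscal a u) (vscal (1 - a) x)) (vadd (vscal b u) (vscal (1 - b) x))
   = vscal (a - b) (vsub u x).
Proof. apply functional_extensionality; intros k; unfold vsub, vadd, vscal; ring. Qed.


Lemma cl_in t : 0 <= Rmax 0 (Rmin 1 t) <= 1.
Proof. unfold Rmax, Rmin; repeat destruct Rle_dec; lra. Qed.
Lemma cl_id t : 0 <= t <= 1 -> Rmax 0 (Rmin 1 t) = t.
Proof. unfold Rmax, Rmin; repeat destruct Rle_dec; lra. Qed.
Lemma cl_lip s t : Rabs (Rmax 0 (Rmin 1 s) - Rmax 0 (Rmin 1 t)) <= Rabs (s - t).
Proof. unfold Rmax, Rmin, Rabs; repeat destruct Rle_dec; repeat destruct Rcase_abs; lra. Qed.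

Lemma breg_lb n nrm dn X d dd x u : is_norm n nrm -> closed_convex n nrm X ->
  C1_on n nrm dn X d dd -> strongly_convex1 n nrm X dd -> X x -> X u ->
  bregman n d dd x u >= nrm (vsub u x) ^ 2 / 2.
Proof.
 intros HN HX Hd Hsc Hx Hu.
 destruct HN as [N0 [N1 [N2 N3]]]. destruct HX as [XE [Xc _]]. destruct Hd as [Hdd [Hlo _]].
 set (v := vsub u x). assert (Hv : inE n v) by (apply inE_sub; auto).
 set (r := nrm v). assert (Hr : 0 <= r) by (apply N0; auto).
 set (c := r ^ 2). set (A := dot n (dd x) v).
 set (zz := fun t => vadd (vscal t u) (vscal (1 - t) x)).
 set (cl := fun t => Rmax 0 (Rmin 1 t)).
 set (phi := fun t => d (zz (cl t))).
 assert (HzX : forall t, 0 <= t <= 1 -> X (zz t)) by (intros; apply Xc; auto).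
 assert (Hzsub : forall a b, vsub (zz a) (zz b) = vscal (a - b) v) by (intros; apply zz_sub).
 assert (Hloc : forall tau, 0 <= tau <= 1 -> forall e, 0 < e -> exists del, 0 < del /\
    forall s, 0 <= s <= 1 -> Rabs (s - tau) * r < del ->
    Rabs (d (zz s) - d (zz tau) - (s - tau) * dot n (dd (zz tau)) v) <= e * (Rabs (s - tau) * r)).
 { intros tau Ht e He. destruct (Hlo (zz tau) (HzX tau Ht) e He) as [del [Hdel H]].
   exists del; split; auto. intros s Hs Hlt.
   assert (Hn : nrm (vsub (zz s) (zz tau)) = Rabs (s - tau) * r) by (rewrite Hzsub; apply N2; auto).
   rewrite <- Hn in Hlt |- *. specialize (H (zz s) (HzX s Hs) Hlt).
   rewrite Hzsub, dot_scal_r in H. rewrite Hzsub. exact H. }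
 assert (Hder : forall t, 0 < t < 1 -> derivable_pt_lim phi t (dot n (dd (zz t)) v)).
 { intros t Ht eps Heps.
   set (e := eps / (2 * (r + 1))).
   assert (He : 0 < e) by (unfold e; apply Rdiv_lt_0_compat; lra).
   destruct (Hloc t ltac:(lra) e He) as [del [Hdel H]].
   assert (Hpos : 0 < Rmin (Rmin t (1 - t)) (del / (r + 1))).
   { apply Rmin_glb_lt; [apply Rmin_glb_lt; lra|apply Rdiv_lt_0_compat; lra]. }
   exists (mkposreal _ Hpos). intros h Hh0 Hh. simpl in Hh.
   assert (Hh1 := Rlt_le_trans _ _ _ Hh (Rmin_l _ _)).
   assert (Hh2 := Rlt_le_trans _ _ _ Hh (Rmin_r _ _)).
   assert (Ht1 : Rmin t (1 - t) <= t) by apply Rmin_l.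
   assert (Ht2 : Rmin t (1 - t) <= 1 - t) by apply Rmin_r.
   apply Rabs_def2 in Hh1. 
   assert (Hs : 0 <= t + h <= 1) by lra.
   unfold phi. unfold cl. rewrite cl_id by lra. rewrite (cl_id t) by lra.
   assert (Hah : 0 < Rabs h) by (apply Rabs_pos_lt; auto).
   assert (Hlt : Rabs (t + h - t) * r < del).
   { replace (t + h - t) with h by ring.
     apply Rle_lt_trans with (Rabs h * (r + 1)); [nra|].
     apply Rmult_lt_reg_r with (/ (r + 1)); [apply Rinv_0_lt_compat; lra|].
     field_simplify; lra. }
   specialize (H (t + h) Hs Hlt). replace (t + h - t) with h in H by ring.
   replace ((d (zz (t + h)) - d (zz t)) / h - dot n (dd (zz t)) v)
     with ((d (zz (t + h)) - d (zz t) - h * dot n (dd (zz t)) v) / h) by (field; auto).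
   unfold Rdiv at 1. rewrite Rabs_mult, Rabs_inv.
   apply Rmult_le_compat_r with (r := / Rabs h) in H; [|left; apply Rinv_0_lt_compat; auto].
   eapply Rle_lt_trans; [exact H|].
   replace (e * (Rabs h * r) * / Rabs h) with (e * r) by (field; lra).
   unfold e. apply Rmult_lt_reg_r with (2 * (r + 1)); [lra|]. field_simplify; nra. }
 assert (Hcont : forall t, 0 <= t <= 1 -> continuity_pt phi t).
 { intros t Ht eps Heps.
   destruct (Hloc t Ht 1 ltac:(lra)) as [del [Hdel H]].
   set (D := dot n (dd (zz t)) v).
   assert (Hpos : 0 < Rmin (del / (r + 1)) (eps / (r + Rabs D + 1))).
   { apply Rmin_glb_lt; apply Rdiv_lt_0_compat; try lra. assert (0 <= Rabs D) by apply Rabs_pos. lra. }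
   exists (Rmin (del / (r + 1)) (eps / (r + Rabs D + 1))). split; auto.
   intros s [_ Hs]. simpl in Hs. unfold R_dist in Hs |- *. simpl in Hs |- *.
   assert (Hs1 := Rlt_le_trans _ _ _ Hs (Rmin_l _ _)).
   assert (Hs2 := Rlt_le_trans _ _ _ Hs (Rmin_r _ _)).
   unfold phi, cl. rewrite (cl_id t) by lra.
   set (sg := Rmax 0 (Rmin 1 s)).
   assert (Hsg : 0 <= sg <= 1) by apply cl_in.
   assert (Hl : Rabs (sg - t) <= Rabs (s - t)).
   { unfold sg. pose proof (cl_lip s t) as Hq. rewrite (cl_id t) in Hq by lra. exact Hq. }
   assert (Hlt : Rabs (sg - t) * r < del).
   { apply Rle_lt_trans with (Rabs (s - t) * (r + 1)).
     { assert (0 <= Rabs (sg - t)) by apply Rabs_pos. nra. }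
     apply Rmult_lt_reg_r with (/ (r + 1)); [apply Rinv_0_lt_compat; lra|].
     field_simplify; lra. }
   specialize (H sg Hsg Hlt). fold D in H.
   assert (HD : Rabs ((sg - t) * D) = Rabs (sg - t) * Rabs D) by apply Rabs_mult.
   assert (Htr : Rabs (d (zz sg) - d (zz t)) <= Rabs (d (zz sg) - d (zz t) - (sg - t) * D) + Rabs ((sg - t) * D)).
   { replace (d (zz sg) - d (zz t)) with ((d (zz sg) - d (zz t) - (sg - t) * D) + (sg - t) * D) at 1 by ring.
     apply Rabs_triang. }
   assert (0 <= Rabs D) by apply Rabs_pos.
   assert (0 <= Rabs (sg - t)) by apply Rabs_pos.
   assert (Rabs (s - t) * (r + Rabs D + 1) < eps).
   { apply Rmult_lt_reg_r with (/ (r + Rabs D + 1)); [apply Rinv_0_lt_compat; lra|].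
     field_simplify; lra. }
   assert (Rabs (sg - t) * (r + Rabs D) <= Rabs (s - t) * (r + Rabs D)) by nra.
   unfold Rdist. rewrite HD in Htr. nra. }
 set (P := fun t => t * A + c * t ^ 2 / 2).
 assert (HP : forall t, derivable_pt_lim P t (A + c * t)).
 { intros t. apply is_derive_Reals. unfold P. auto_derive; auto. field. }
 set (Psi := fun t => phi t - P t).
 destruct (MVT_gen Psi 0 1 (fun t => dot n (dd (zz t)) v - (A + c * t))) as [c0 [Hc0 Heq]].
 { intros t Ht. rewrite Rmin_left in Ht by lra. rewrite Rmax_right in Ht by lra.
   apply is_derive_Reals. apply (derivable_pt_lim_minus phi P). apply Hder; auto. apply HP. }
 { intros t Ht. rewrite Rmin_left in Ht by lra. rewrite Rmax_right in Ht by lra.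
   apply (continuity_pt_minus phi P). apply Hcont; auto.
   apply derivable_continuous_pt. exists (A + c * t). apply HP. }
 rewrite Rmin_left in Hc0 by lra. rewrite Rmax_right in Hc0 by lra.
 assert (Hz0 : zz 0 = x) by (apply functional_extensionality; intros k; unfold zz, vadd, vscal; simpl; ring).
 assert (Hz1 : zz 1 = u) by (apply functional_extensionality; intros k; unfold zz, vadd, vscal; simpl; ring).
 unfold Psi, phi, P, cl in Heq. rewrite (cl_id 1), (cl_id 0) in Heq by lra.
 rewrite Hz0, Hz1 in Heq.
 assert (Hdf : dot n (dd (zz c0)) v - (A + c * c0) >= 0).
 { destruct (Req_dec c0 0) as [H0|H0].
   - subst c0. rewrite Hz0. unfold A. nra.
   - specialize (Hsc (zz c0) x (HzX c0 Hc0) Hx).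
     assert (Hzx : vsub (zz c0) x = vscal c0 v).
     { rewrite <- Hz0 at 1. rewrite Hzsub. f_equal; ring. }
     rewrite Hzx, dot_scal_r, dot_sub_l, N2 in Hsc by auto.
     rewrite Rabs_right in Hsc by lra. fold r in Hsc. unfold c, A.
     assert (0 < c0) by lra.
     assert (c0 * (dot n (dd (zz c0)) v - dot n (dd x) v - r ^ 2 * c0) >= 0) by nra.
     destruct (Rle_or_lt 0 (dot n (dd (zz c0)) v - (dot n (dd x) v + r ^ 2 * c0))); [lra|nra]. }
 unfold bregman. fold v. fold A. unfold c in *. nra.
Qed.

Lemma nrm_sym n nrm x u : is_norm n nrm -> inE n x -> inE n u -> nrm (vsub x u) = nrm (vsub u x).
Proof. intros [_ [_ [N2 _]]] Hx Hu.
 replace (vsub x u) with (vscal (-1) (vsub u x)).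
 rewrite N2 by (apply inE_sub; auto). rewrite Rabs_left by lra. ring.
 apply functional_extensionality; intros k; unfold vsub, vscal; ring. Qed.

Lemma step_lemma n nrm dn X d dd x u s h w : is_norm n nrm -> is_dual_norm n nrm dn ->
  closed_convex n nrm X -> C1_on n nrm dn X d dd -> strongly_convex1 n nrm X dd ->
  X x -> inE n s -> 0 < h -> is_mirr n X d dd x (vscal h s) u -> X w ->
  h * dot n s (vsub x w) <= h ^ 2 * dn s ^ 2 / 2 + bregman n d dd x w - bregman n d dd u w.
Proof.
 intros HN HD HX Hd Hsc Hx Hs Hh [Hu Hmin] Hw.
 assert (XE : forall y, X y -> inE n y) by apply HX.
 assert (Hopt := opt_cond n nrm dn X d dd u (vsub (vscal h s) (dd x)) HN HX Hd Hu).
 assert (Hopt' : 0 <= dot n (vsub (vscal h s) (dd x)) (vsub w u) + dot n (dd u) (vsub w u)).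
 { apply Hopt; auto. intros w' Hw'. specialize (Hmin w' Hw'). simpl in Hmin.
   unfold bregman in Hmin.
   repeat rewrite ?dot_sub_r, ?dot_sub_l, ?dot_scal_l in *. nra. }
 assert (Hb := breg_lb n nrm dn X d dd x u HN HX Hd Hsc Hx Hu).
 assert (Hdl := dot_le_dn n nrm dn s (vsub x u) HN HD Hs (inE_sub _ _ _ (XE x Hx) (XE u Hu))).
 rewrite (nrm_sym n nrm x u HN (XE x Hx) (XE u Hu)) in Hdl.
 set (r := nrm (vsub u x)) in *.
 unfold bregman in *.
 repeat rewrite ?dot_sub_r, ?dot_sub_l, ?dot_scal_l in *.
 assert (0 <= (h * dn s - r) ^ 2) by apply pow2_ge_0.
 nra.
Qed.

Lemma jensen n nrm X F K (a : nat -> R) (p : nat -> vec) : closed_convex n nrm X -> convex_on X F ->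
 (forall i, (i < K)%nat -> 0 <= a i) -> (forall i, (i < K)%nat -> X (p i)) -> 0 < rsum K a ->
 X (fun k => rsum K (fun i => a i * p i k) / rsum K a) /\
 F (fun k => rsum K (fun i => a i * p i k) / rsum K a) <= rsum K (fun i => a i * F (p i)) / rsum K a.
Proof.
 intros HX HF. destruct HX as [_ [Xc _]]. induction K as [|K IH]; intros Ha Hp Hpos; simpl in *; [lra|].
 assert (HaK : 0 <= a K) by (apply Ha; lia).
 assert (HA : 0 <= rsum K a) by (apply rsum_nonneg; intros; apply Ha; lia).
 destruct HA as [HA|HA].
 - destruct IH as [IHX IHF]; [intros; apply Ha; lia|intros; apply Hp; lia|auto|].
   set (P := fun k => rsum K (fun i => a i * p i k) / rsum K a) in *.
   set (t := rsum K a / (rsum K a + a K)).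
   assert (Heq : (fun k => (rsum K (fun i => a i * p i k) + a K * p K k) / (rsum K a + a K))
      = vadd (vscal t P) (vscal (1 - t) (p K))).
   { apply functional_extensionality; intros k. unfold vadd, vscal, t, P. field. lra. }
   rewrite Heq. assert (Ht : 0 <= t <= 1).
   { unfold t. split. apply Rmult_le_pos; [lra|left; apply Rinv_0_lt_compat; lra].
     apply Rmult_le_reg_r with (rsum K a + a K); [lra|]. field_simplify; lra. }
   split; [apply Xc; auto; apply Hp; lia|].
   assert (Hc := HF P (p K) t IHX (Hp K ltac:(lia)) Ht).
   eapply Rle_trans; [exact Hc|].
   replace ((rsum K (fun i => a i * F (p i)) + a K * F (p K)) / (rsum K a + a K))
     with (t * (rsum K (fun i => a i * F (p i)) / rsum K a) + (1 - t) * F (p K))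
     by (unfold t; field; lra).
   apply Rplus_le_compat_r. apply Rmult_le_compat_l; lra.
 - assert (Hz : forall i, (i < K)%nat -> a i = 0).
   { apply rsum_zero_inv; [intros; apply Ha; lia|auto]. }
   assert (E1 : forall k, rsum K (fun i => a i * p i k) = 0).
   { intros k. rewrite <- (rsum_zero K). apply rsum_ext. intros i Hi. rewrite Hz by auto. ring. }
   assert (E2 : rsum K (fun i => a i * F (p i)) = 0).
   { rewrite <- (rsum_zero K). apply rsum_ext. intros i Hi. rewrite Hz by auto. ring. }
   rewrite <- HA in *. rewrite E2.
   assert (Heq : (fun k => (rsum K (fun i => a i * p i k) + a K * p K k) / (0 + a K)) = p K).
   { apply functional_extensionality; intros k. rewrite E1. field. lra. }
   rewrite Heq. split. apply Hp; lia. right. field. lra.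
Qed.

Theorem theorem1
  (n : nat) (nrm dn : vec -> R) (X : vec -> Prop)
  (f g : vec -> R) (gf gg : vec -> vec)
  (d : vec -> R) (dd : vec -> vec) (x0 xstar : vec)
  (Theta0 eps : R) (xs : nat -> vec) (N : nat)
  (Hnorm : is_norm n nrm)
  (Hdual : is_dual_norm n nrm dn)
  (HX : closed_convex n nrm X)
  (Hfconv : convex_on X f) (Hgconv : convex_on X g)
  (Hflip : lipschitz_on nrm X f) (Hglip : lipschitz_on nrm X g)
  (Hgf : forall x, X x -> is_subgrad n X f x (gf x))
  (Hgg : forall x, X x -> is_subgrad n X g x (gg x))
  (Hxstar : X xstar /\ g xstar <= 0 /\
            forall x, X x -> g x <= 0 -> f xstar <= f x)
  (Hd : C1_on n nrm dn X d dd)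
  (Hdsc : strongly_convex1 n nrm X dd)
  (Hx0 : is_argmin X d x0)
  (HTheta : 0 < Theta0) (HTheta0 : d xstar - d x0 <= Theta0 ^ 2)
  (Heps : 0 < eps)
  (Hrun : md_iterates n X d dd dn g gf gg eps x0 xs N)
  (Hnz : forall i, (i < N)%nat -> nonzero_vec n (gf (xs i)) /\ nonzero_vec n (gg (xs i)))
  (Hstop : md_stops_at dn g gf gg eps Theta0 xs N) :
  (exists i, (i < N)%nat /\ g (xs i) <= eps) /\
  f (md_output dn g gf gg eps xs N) - f xstar <= eps /\
  g (md_output dn g gf gg eps xs N) <= eps /\
  (forall M, 0 < M -> INR N / M ^ 2 = md_S dn g gf gg eps xs N ->
     INR N >= 2 * M ^ 2 * Theta0 ^ 2 / eps ^ 2).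
Proof.
 destruct Hxstar as [HXs [Hgs _]].
 destruct Hrun as [Hxs0 Hrun].
 destruct Hstop as [HN1 [HS _]].
 assert (XE : forall y, X y -> inE n y) by apply HX.
 assert (HxsX : forall i, (i <= N)%nat -> X (xs i)).
 { induction i; intros Hi. rewrite Hxs0. apply Hx0.
   destruct (Hrun i ltac:(lia)) as [H _]. exact H. }
 set (V := fun i => bregman n d dd (xs i) xstar).
 set (M := fun i => md_M dn g gf gg eps (xs i)).
 set (w := fun i => if productive g eps (xs i) then md_h dn g gf gg eps (xs i) else 0).
 set (SS := md_S dn g gf gg eps xs N) in *.
 assert (HMpos : forall i, (i < N)%nat -> 0 < M i).
 { intros i Hi. unfold M, md_M, md_sg. destruct (Hnz i Hi) as [H1 H2].
   assert (Hi' := HxsX i ltac:(lia)).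
   destruct (productive g eps (xs i)); eapply dn_pos; eauto.
   apply (Hgf _ Hi'). apply (Hgg _ Hi'). }
 assert (Hstep : forall i, (i < N)%nat ->
    w i * (f (xs i) - f xstar) - eps * w i + eps ^ 2 / 2 * / M i ^ 2 <= V i - V (S i) /\
    (g (xs i) > eps -> eps ^ 2 / 2 * / M i ^ 2 < V i - V (S i))).
 { intros i Hi. assert (Hi' := HxsX i ltac:(lia)). assert (HM := HMpos i Hi).
   assert (Hsin : inE n (md_sg g gf gg eps (xs i))).
   { unfold md_sg. destruct (productive g eps (xs i)); [apply (Hgf _ Hi')|apply (Hgg _ Hi')]. }
   assert (Hh : 0 < md_h dn g gf gg eps (xs i)).
   { unfold md_h. fold (M i). apply Rdiv_lt_0_compat; auto. apply pow_lt; auto. }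
   assert (Hst := step_lemma n nrm dn X d dd (xs i) (xs (S i)) (md_sg g gf gg eps (xs i))
       (md_h dn g gf gg eps (xs i)) xstar Hnorm Hdual HX Hd Hdsc Hi' Hsin Hh (Hrun i Hi) HXs).
   change (bregman n d dd (xs i) xstar) with (V i) in Hst. change (bregman n d dd (xs (S i)) xstar) with (V (S i)) in Hst.
   change (dn (md_sg g gf gg eps (xs i))) with (M i) in Hst.
   unfold md_h in *. fold (M i) in *.
   assert (Hsq : (eps / M i ^ 2) ^ 2 * M i ^ 2 / 2 = eps ^ 2 / 2 * / M i ^ 2) by (field; lra).
   rewrite Hsq in Hst.
   assert (Hhe : eps / M i ^ 2 * eps = eps ^ 2 * / M i ^ 2) by (field; lra).
   assert (Hpi : 0 < / M i ^ 2) by (apply Rinv_0_lt_compat; apply pow_lt; auto).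
   unfold w, md_h. fold (M i). unfold md_sg in *.
   unfold productive in *. destruct (Rle_dec (g (xs i)) eps) as [Hp|Hp].
   - destruct (Hgf _ Hi') as [_ Hsub]. specialize (Hsub xstar HXs).
     rewrite dot_sub_r in Hsub, Hst.
     split; [|intros; lra].
     assert (eps / M i ^ 2 * (f (xs i) - f xstar) <= eps / M i ^ 2 * (dot n (gf (xs i)) (xs i) - dot n (gf (xs i)) xstar)).
     { apply Rmult_le_compat_l; [left; apply Rdiv_lt_0_compat; auto; apply pow_lt; auto|lra]. }
     rewrite (Rmult_comm eps (eps / M i ^ 2)), Hhe. lra.
   - destruct (Hgg _ Hi') as [_ Hsub]. specialize (Hsub xstar HXs).
     rewrite dot_sub_r in Hsub, Hst.
     assert (eps / M i ^ 2 * eps < eps / M i ^ 2 * (dot n (gg (xs i)) (xs i) - dot n (gg (xs i)) xstar)).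
     { apply Rmult_lt_compat_l; [apply Rdiv_lt_0_compat; auto; apply pow_lt; auto|lra]. }
     rewrite Hhe in H. split; [|intros]; lra. }
 assert (HVN : 0 <= V N).
 { assert (H := breg_lb n nrm dn X d dd (xs N) xstar Hnorm HX Hd Hdsc (HxsX N ltac:(lia)) HXs).
   fold (V N) in H. assert (0 <= nrm (vsub xstar (xs N)) ^ 2) by apply pow2_ge_0. lra. }
 assert (HV0 : V 0%nat <= Theta0 ^ 2).
 { unfold V. rewrite Hxs0. destruct Hx0 as [Hx0X Hx0m].
   assert (H := opt_cond n nrm dn X d dd x0 (fun _ => 0) Hnorm HX Hd Hx0X).
   assert (Hz : forall p, dot n (fun _ => 0) p = 0).
   { intros p. unfold dot. transitivity (rsum n (fun _ => 0)); [apply rsum_ext; intros; cbv beta; ring|apply rsum_zero]. }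
   assert (H' : 0 <= dot n (dd x0) (vsub xstar x0)).
   { assert (H2 : forall w', X w' -> d x0 + dot n (fun _ => 0) x0 <= d w' + dot n (fun _ => 0) w').
     { intros w' Hw'. rewrite !Hz. specialize (Hx0m w' Hw'). lra. }
     specialize (H H2 xstar HXs). rewrite Hz in H. lra. }
   unfold bregman. lra. }
 assert (Htele := rsum_tele N V).
 assert (Hwnn : forall i, (i < N)%nat -> 0 <= w i).
 { intros i Hi. unfold w. destruct (productive g eps (xs i)); [|lra].
   unfold md_h. apply Rlt_le, Rdiv_lt_0_compat; auto. apply pow_lt. apply HMpos; auto. }
 assert (HSdef : SS = rsum N (fun i => / M i ^ 2)) by reflexivity.
 assert (Hex : exists i, (i < N)%nat /\ g (xs i) <= eps).
 { apply NNPP. intros Hne.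
   assert (Hall : forall i, (i < N)%nat -> eps ^ 2 / 2 * / M i ^ 2 < V i - V (S i)).
   { intros i Hi. apply (Hstep i Hi). apply Rnot_le_gt. intros Hle. apply Hne. exists i; auto. }
   assert (Hlt := rsum_lt N _ _ HN1 Hall). rewrite Htele, rsum_scal, <- HSdef in Hlt.
   assert (eps ^ 2 / 2 * SS >= eps ^ 2 / 2 * (2 * Theta0 ^ 2 / eps ^ 2)).
   { apply Rle_ge, Rmult_le_compat_l; [|lra]. assert (0 < eps ^ 2) by (apply pow_lt; auto). lra. }
   replace (eps ^ 2 / 2 * (2 * Theta0 ^ 2 / eps ^ 2)) with (Theta0 ^ 2) in H by (field; lra).
   lra. }
 destruct Hex as [j [Hj Hgj]].
 assert (HW : 0 < rsum N w).
 { apply (rsum_pos N w j Hwnn Hj). unfold w. unfold productive.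
   destruct (Rle_dec (g (xs j)) eps); [|lra]. unfold md_h. fold (M j).
   apply Rdiv_lt_0_compat; auto. apply pow_lt. apply HMpos; auto. }
 assert (Hsum : rsum N (fun i => w i * (f (xs i) - f xstar)) <= eps * rsum N w).
 { assert (Hle := rsum_le N _ _ (fun i Hi => proj1 (Hstep i Hi))).
   rewrite Htele in Hle. rewrite rsum_plus, rsum_minus, rsum_scal, rsum_scal, <- HSdef in Hle.
   assert (eps ^ 2 / 2 * SS >= eps ^ 2 / 2 * (2 * Theta0 ^ 2 / eps ^ 2)).
   { apply Rle_ge, Rmult_le_compat_l; [|lra]. assert (0 < eps ^ 2) by (apply pow_lt; auto). lra. }
   replace (eps ^ 2 / 2 * (2 * Theta0 ^ 2 / eps ^ 2)) with (Theta0 ^ 2) in H by (field; lra).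
   lra. }
 assert (Hout : md_output dn g gf gg eps xs N = (fun k => rsum N (fun i => w i * xs i k) / rsum N w)).
 { apply functional_extensionality; intros k. unfold md_output. f_equal; apply rsum_ext; intros i Hi;
   unfold w; destruct (productive g eps (xs i)); ring. }
 assert (HxsX' : forall i, (i < N)%nat -> X (xs i)) by (intros; apply HxsX; lia).
 destruct (jensen n nrm X f N w xs HX Hfconv Hwnn HxsX' HW) as [_ Hjf].
 destruct (jensen n nrm X g N w xs HX Hgconv Hwnn HxsX' HW) as [_ Hjg].
 rewrite Hout. split; [exists j; auto|]. split; [|split].
 - eapply Rle_trans with (rsum N (fun i => w i * f (xs i)) / rsum N w - f xstar); [lra|].
   apply Rmult_le_reg_r with (rsum N w); auto.
   replace ((rsum N (fun i => w i * f (xs i)) / rsum N w - f xstar) * rsum N w)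
     with (rsum N (fun i => w i * (f (xs i) - f xstar))).
   lra.
   rewrite (rsum_ext N _ (fun i => w i * f (xs i) - f xstar * w i)) by (intros; ring).
   rewrite rsum_minus, rsum_scal. field. lra.
 - eapply Rle_trans; [exact Hjg|].
   apply Rmult_le_reg_r with (rsum N w); auto.
   replace (rsum N (fun i => w i * g (xs i)) / rsum N w * rsum N w) with (rsum N (fun i => w i * g (xs i))) by (field; lra).
   rewrite <- rsum_scal.
   apply rsum_le. intros i Hi. unfold w. unfold productive.
   destruct (Rle_dec (g (xs i)) eps); [|lra].
   assert (0 <= md_h dn g gf gg eps (xs i)).
   { unfold md_h. apply Rlt_le, Rdiv_lt_0_compat; auto. apply pow_lt. apply HMpos; auto. }
   nra.
 - intros M0 HM0 HE. change (md_S dn g gf gg eps xs N) with SS in HE.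
   assert (Hm2 : 0 < M0 ^ 2) by (apply pow_lt; auto).
   assert (INR N = SS * M0 ^ 2) by (rewrite <- HE; field; lra).
   assert (2 * M0 ^ 2 * Theta0 ^ 2 / eps ^ 2 = M0 ^ 2 * (2 * Theta0 ^ 2 / eps ^ 2)) by (field; lra).
   nra.
Qed.
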